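(* Let $P$ be a finite poset and $Q$ a poset ideal of $P$. Then the following are equivalent: (1) $\tilde\chi(\{y\in Q\mid y<x\})=0$ for every $x\in(P\cup\{\infty\})\setminus Q$; (2) $\tilde\chi((-\infty,x)_P)=0$ for every $x\in(P\cup\{\infty\})\setminus Q$.
   Context: A poset ideal is a downward closed subset. $\infty$ (resp. $-\infty$) is a new element larger (resp. smaller) than all elements of $P$, and $(-\infty,x)_P=\{z\in P:z<x\}$. For a finite poset $S$, $\tilde\chi(S)=\sum_{\sigma}(-1)^{|\sigma|-1}$, the sum over all chains $\sigma$ of $S$ including the empty chain. *)

(* Defs.v *)
From HB Require Import structures.
From mathcomp Require Import all_boot all_order all_algebra.
Set Implicit Arguments. Unset Strict Implicit. Unset Printing Implicit Defensive.
Import Order.TTheory GRing.Theory Num.Theory.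
Local Open Scope order_scope.

Section Defs.
Context {disp : Order.disp_t} {P : finPOrderType disp}.

Definition is_chain (C : {set P}) : bool :=
  [forall a in C, forall b in C, (a <= b) || (b <= a)].

Definition is_ideal (Q : {set P}) : Prop :=
  forall x y : P, y <= x -> x \in Q -> y \in Q.

(* reduced Euler characteristic: sum over all chains sigma of S (including
   the empty chain) of (-1)^(|sigma| - 1), computed in int as -(-1)^|sigma| *)
Definition rchi (S : {set P}) : int :=
  \sum_(C : {set P} | (C \subset S) && is_chain C) (- (-1) ^+ #|C|)%R.

(* P ∪ {∞} is modelled by option P, with None = ∞ *)
Definition in_ext (Q : {set P}) (x : option P) : bool :=
  if x is Some a then a \in Q else false.

(* (-∞, x)_P = { z in P | z < x }; for x = ∞ this is all of P *)
Definition below (x : option P) : {set P} :=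
  if x is Some a then [set z | z < a] else setT.

End Defs.

(* Main.v *)
Require Import Defs.
From HB Require Import structures.
From mathcomp Require Import all_boot all_order all_algebra.
Import Order.TTheory GRing.Theory Num.Theory.
Local Open Scope order_scope.

Section S.
Context {disp : Order.disp_t} {P : finPOrderType disp}.
Implicit Types (Q S C A D : {set P}).

Lemma chainP C : reflect (forall a b, a \in C -> b \in C -> (a <= b) || (b <= a)) (is_chain C).
Proof.
apply: (iffP forallP) => [H a b aC bC | H a].
  by move/implyP: (H a) => /(_ aC)/forallP/(_ b)/implyP/(_ bC).
by apply/implyP => aC; apply/forallP => b; apply/implyP => bC; apply: H.
Qed.

Lemma chain_sub C D : C \subset D -> is_chain D -> is_chain C.
Proof.
move=> /subsetP sCD /chainP H; apply/chainP => a b aC bC; apply: H; exact: sCD.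
Qed.

Lemma chain_min S : is_chain S -> S != set0 ->
  exists2 c, c \in S & forall c', c' \in S -> c <= c'.
Proof.
move=> /chainP ch /set0Pn [c0 Hc0].
case: (arg_minnP (fun c => #|[set z | z < c]|) Hc0) => c Hc Hmin.
exists c => // c' Hc'.
case/orP: (ch c c' Hc Hc') => // Hle.
case: (eqVneq c' c) => [-> //| ne].
have lt: c' < c by rewrite lt_def eq_sym ne Hle.
have := Hmin c' Hc'.
have pr : [set z | z < c'] \proper [set z | z < c].
  apply/properP; split.
    by apply/subsetP => z; rewrite !inE => zc; apply: lt_trans zc lt.
  by exists c'; rewrite !inE ?ltxx.
by move: (proper_card pr); rewrite ltnNge => /negbTE ->.
Qed.

Lemma below_trans x (m z : P) : m \in below x -> z < m -> z \in below x.
Proof. by case: x => [a|] //=; rewrite !inE => ma zm; apply: lt_trans zm ma. Qed.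


Definition PA Q m A := (A \subset Q :&: below (Some m)) && is_chain A.
Definition PD Q x m D :=
  [&& D \subset below x :\: Q, is_chain D, m \in D & [forall c in D, m <= c]].
Definition PC Q x m C :=
  [&& C \subset below x, is_chain C, m \in C & [forall c in C, (c \notin Q) ==> (m <= c)]].

Lemma split_equiv Q x m A D : is_ideal Q -> m \in below x -> m \notin Q ->
  (PC Q x m (A :|: D) && (((A :|: D) :&: Q, (A :|: D) :\: Q) == (A, D)))
  = PA Q m A && PD Q x m D.
Proof.
move=> idQ mx mQ; apply/idP/idP.
  move=> /andP[/and4P[sub ch mC /forallP minC] /eqP[eA eD]].
  have mD : m \in D by rewrite -eD inE mQ mC.
  apply/andP; split; [apply/andP; split|].
  - apply/subsetP => a aA.
    have aQ : a \in Q by move: aA; rewrite -eA inE => /andP[].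
    have aC : a \in A :|: D by rewrite inE aA.
    rewrite !inE aQ /=.
    case/orP: ((chainP _ ch) a m aC mC) => [am | ma].
      rewrite lt_def am andbT; apply/eqP => e; by move: mQ; rewrite e aQ.
    by move: mQ; rewrite (idQ a m ma aQ).
  - by apply: chain_sub ch; apply: subsetUl.
  - apply/and4P; split => //.
    + by rewrite -eD; apply: setSD.
    + by apply: chain_sub ch; apply: subsetUr.
    + apply/forallP => c; apply/implyP => cD; move: cD; rewrite -eD inE => /andP[cQ cC].
      by move/implyP: (minC c) => /(_ cC)/implyP/(_ cQ).
move=> /andP[/andP[sA chA] /and4P[sD chD mD /forallP minD]].
have hA a : a \in A -> (a \in Q) && (a < m).
  by move/(subsetP sA); rewrite !inE.
have hD d : d \in D -> (d \notin Q) && (d \in below x).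
  by move/(subsetP sD); rewrite !inE.
have mind d : d \in D -> m <= d by move=> dD; move/implyP: (minD d); apply.
apply/andP; split; last first.
  apply/eqP; congr pair; apply/setP => z; rewrite !inE;
  have := hA z; have := hD z;
  case: (z \in A); case: (z \in D); case: (z \in Q) => //=;
  by [ move=> _ /(_ isT) | move=> /(_ isT) ].
apply/and4P; split.
- rewrite subUset; apply/andP; split; apply/subsetP => z zi.
    by case/andP: (hA z zi) => _; apply: below_trans mx.
  by case/andP: (hD z zi).
- apply/chainP => a b; rewrite !inE => /orP[aA|aD] /orP[bA|bD].
  + exact: (chainP _ chA).
  + case/andP: (hA a aA) => _ am; by rewrite (ltW (lt_le_trans am (mind b bD))).
  + case/andP: (hA b bA) => _ bm; by rewrite (ltW (lt_le_trans bm (mind a aD))) orbT.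
  + exact: (chainP _ chD).
- by rewrite inE mD orbT.
- apply/forallP => c; apply/implyP; rewrite inE => /orP[cA|cD]; apply/implyP => cQ.
    by case/andP: (hA c cA) => cQ'; rewrite cQ' in cQ.
  exact: mind.
Qed.


Lemma block Q x m : is_ideal Q -> m \in below x -> m \notin Q ->
  (\sum_(C | PC Q x m C) (- (-1) ^+ #|C|) : int)%R
  = (rchi (Q :&: below (Some m)) * \sum_(D | PD Q x m D) (-1) ^+ #|D|)%R.
Proof.
move=> idQ mx mQ.
rewrite (reindex_onto (fun p : {set P} * {set P} => p.1 :|: p.2)
   (fun C => (C :&: Q, C :\: Q))) /=; last by move=> C _; rewrite setID.
rewrite (eq_bigl (fun p => PA Q m p.1 && PD Q x m p.2)); last first.
  by move=> [A D] /=; rewrite split_equiv.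
rewrite (eq_bigr (fun p : {set P} * {set P} => ((- (-1) ^+ #|p.1|) * (-1) ^+ #|p.2| : int)%R)); last first.
  move=> [A D] /= /andP[/andP[sA _] /and4P[sD _ _ _]].
  have e0 : A :&: D = set0.
    apply/setP => z; rewrite !inE; apply/negbTE; apply/andP => [[zA zD]].
    move: (subsetP sA z zA) (subsetP sD z zD); rewrite !inE => /andP[-> _] /andP[].
    by [].
  by rewrite cardsU e0 cards0 subn0 exprD mulNr.
rewrite -(pair_big_dep (PA Q m) (fun _ => PD Q x m)
   (fun A D => ((- (-1) ^+ #|A|) * (-1) ^+ #|D| : int)%R)) /=.
rewrite /rchi big_distrl /=; apply: eq_big => // A _.
by rewrite big_distrr.
Qed.


Definition pmin Q C : option P :=
  [pick c in C :\: Q | [forall c' in C :\: Q, c <= c']].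

Lemma key Q x : is_ideal Q ->
  (forall m, m \in below x -> m \notin Q -> rchi (Q :&: below (Some m)) = 0%R) ->
  rchi (below x) = rchi (Q :&: below x).
Proof.
move=> idQ H.
rewrite /rchi (bigID (fun C => C \subset Q)) /=.
rewrite [X in (_ + X)%R](_ : _ = 0%R) ?addr0; last first.
  rewrite (partition_big (pmin Q)
    (fun j => if j is Some m then (m \in below x) && (m \notin Q) else false)) /=;
    last first.
    move=> C /andP[/andP[sub ch] nsub]; rewrite /pmin; case: pickP => [c /andP[cCQ _] | none].
      by move: cCQ; rewrite inE => /andP[cQ cC]; rewrite cQ (subsetP sub c cC).
    exfalso.
    have ne : C :\: Q != set0 by rewrite setD_eq0.
    have [c cS cmin] := chain_min _ (chain_sub _ _ (subsetDl C Q) ch) ne.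
    have := none c; rewrite cS /=; move/negP; apply; apply/forallP => c'.
    by apply/implyP => ?; exact: cmin.
  apply: big1 => [[m|]] // /andP[mx mQ].
  rewrite (eq_bigl (PC Q x m)); first by rewrite block // H // mul0r.
  move=> C; rewrite /PC /pmin; apply/idP/idP.
    move=> /andP[/andP[/andP[sub ch] nsub]]; case: pickP => // c /andP[cCQ /forallP cmin] /eqP [ec].
    subst c; move: (cCQ); rewrite inE => /andP[_ mC].
    apply/and4P; split => //; apply/forallP => c'; apply/implyP => c'C; apply/implyP => c'Q.
    by move/implyP: (cmin c'); apply; rewrite inE c'Q c'C.
  move=> /and4P[sub ch mC /forallP mmin].
  have nsub : ~~ (C \subset Q).
    by apply/negP => /subsetP/(_ m mC); rewrite (negbTE mQ).
  rewrite sub ch nsub /=; case: pickP => [c /andP[cCQ /forallP cmin] | none].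
    have mCQ : m \in C :\: Q by rewrite inE mQ mC.
    have cm := implyP (cmin m) mCQ.
    have mc : m <= c.
      by move: cCQ; rewrite inE => /andP[cQ cC]; exact: (implyP (implyP (mmin c) cC) cQ).
    by rewrite (@le_anti _ _ c m) ?cm ?mc.
  have := none m; rewrite inE mQ mC /=; move/negP; case; apply/forallP => c'.
  apply/implyP; rewrite inE => /andP[c'Q c'C]; exact: (implyP (implyP (mmin c') c'C) c'Q).
apply: eq_bigl => C; rewrite subsetI.
by case: (C \subset Q); case: (C \subset below x); case: (is_chain C).
Qed.

End S.

Theorem lemma6p10 (disp : Order.disp_t) (P : finPOrderType disp) (Q : {set P}) :
  is_ideal Q ->
  ((forall x : option P, ~~ in_ext Q x -> rchi (Q :&: below x) = 0%R) <->
   (forall x : option P, ~~ in_ext Q x -> rchi (below x) = 0%R)).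
Proof.
move=> idQ; split => H.
  move=> x xQ; rewrite (key _ _ idQ); first exact: H.
  by move=> m _ mQ; exact: (H (Some m) mQ).
have hS : forall a : P, a \notin Q -> rchi (Q :&: below (Some a)) = 0%R.
  suff: forall n (a : P), (#|below (Some a)| < n)%N -> a \notin Q ->
      rchi (Q :&: below (Some a)) = 0%R.
    by move=> hh a; apply: hh.
  elim => // n IH a lt aQ.
  rewrite -(key _ _ idQ); first exact: (H (Some a) aQ).
  move=> m ma mQ; apply: IH mQ.
  have pr : below (Some m) \proper below (Some a).
    apply/properP; split.
      by apply/subsetP => z; rewrite /= !inE => zm; move: ma; rewrite inE; apply: lt_trans.
    by exists m; rewrite /= ?inE ?ltxx //; move: ma; rewrite inE.
  exact: leq_trans (proper_card pr) lt.
case => [a aQ|_]; first exact: hS.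
rewrite -(key _ _ idQ); first exact: (H None).
by move=> m _ mQ; apply: hS.
Qed.
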